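(* If $K\subseteq\mathbb{R}^d$ is a compact set with infinitely many connected components, then $(C^1(K),\|\cdot\|_{C^1(K)})$ is not complete.
   Context: $C^1(K)$ is the set of $f:K\to\mathbb{R}$ admitting a continuous derivative on $K$, i.e. a continuous $df:K\to\mathbb{R}^d$ with $\lim_{y\to x,\,y\in K\setminus\{x\}}\frac{f(y)-f(x)-\langle df(x),y-x\rangle}{|y-x|}=0$ for all $x\in K$. Its norm is $\|f\|_{C^1(K)}=\|f\|_K+\inf\{\|df\|_K: df \text{ a continuous derivative of } f \text{ on } K\}$, where $\|\cdot\|_K$ is the sup norm on $K$. *)

(* Defs.v *)
From Stdlib Require Import Reals Classical ClassicalEpsilon.
From mathcomp Require Import ssreflect ssrbool ssrfun eqtype ssrnat seq fintype bigop.
Open Scope R_scope.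

Definition vec (d : nat) := 'I_d -> R.

Definition vsub {d} (x y : vec d) : vec d := fun i => x i - y i.
Definition inner {d} (x y : vec d) : R := \big[Rplus/0]_(i < d) (x i * y i).
Definition enorm {d} (x : vec d) : R := sqrt (inner x x).

Definition vopen {d} (U : vec d -> Prop) : Prop :=
  forall x, U x -> exists r, 0 < r /\ forall y, enorm (vsub y x) < r -> U y.

(* Compactness (sequential compactness, equivalent to open-cover compactness
   in the metric space R^d). *)
Definition vcompact {d} (K : vec d -> Prop) : Prop :=
  forall u : nat -> vec d, (forall n, K (u n)) ->
  exists (phi : nat -> nat) (l : vec d),
    (forall n m, (n < m)%nat -> (phi n < phi m)%nat) /\ K l /\
    forall eps, 0 < eps -> exists N, forall n, (N <= n)%nat ->
      enorm (vsub (u (phi n)) l) < eps.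

(* Connectedness of a subset C of R^d in the subspace topology. *)
Definition vconnected {d} (C : vec d -> Prop) : Prop :=
  forall U V : vec d -> Prop, vopen U -> vopen V ->
    (forall x, C x -> U x \/ V x) ->
    (forall x, C x -> U x -> V x -> False) ->
    (forall x, C x -> U x) \/ (forall x, C x -> V x).

Definition same_component {d} (K : vec d -> Prop) (x y : vec d) : Prop :=
  exists C : vec d -> Prop,
    vconnected C /\ (forall z, C z -> K z) /\ C x /\ C y.

Definition infinitely_many_components {d} (K : vec d -> Prop) : Prop :=
  ~ exists l : list (vec d), forall y, K y ->
      exists x, List.In x l /\ same_component K x y.

Definition is_cont_deriv {d} (K : vec d -> Prop) (f : vec d -> R)
  (df : vec d -> vec d) : Prop :=
  (forall x, K x -> forall eps, 0 < eps -> exists delta, 0 < delta /\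
     forall y, K y -> enorm (vsub y x) < delta ->
       enorm (vsub (df y) (df x)) < eps) /\
  (forall x, K x -> forall eps, 0 < eps -> exists delta, 0 < delta /\
     forall y, K y -> y <> x -> enorm (vsub y x) < delta ->
       Rabs ((f y - f x - inner (df x) (vsub y x)) / enorm (vsub y x)) < eps).

(* f belongs to C^1(K). Functions are total on R^d; only values on K matter. *)
Definition C1 {d} (K : vec d -> Prop) (f : vec d -> R) : Prop :=
  exists df, is_cont_deriv K f df.

(* Supremum and infimum of a set of reals (chosen classically; the value is
   arbitrary when no such bound exists). *)
Definition is_glb (E : R -> Prop) (m : R) : Prop :=
  (forall y, E y -> m <= y) /\ (forall b, (forall y, E y -> b <= y) -> b <= m).
Definition Rsup (E : R -> Prop) : R := epsilon (inhabits 0) (is_lub E).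
Definition Rinf (E : R -> Prop) : R := epsilon (inhabits 0) (is_glb E).

Definition supnormK {d} (K : vec d -> Prop) (g : vec d -> R) : R :=
  Rsup (fun y => exists x, K x /\ y = Rabs (g x)).
Definition supnormK_vec {d} (K : vec d -> Prop) (g : vec d -> vec d) : R :=
  Rsup (fun y => exists x, K x /\ y = enorm (g x)).

Definition C1norm {d} (K : vec d -> Prop) (f : vec d -> R) : R :=
  supnormK K f +
  Rinf (fun y => exists df, is_cont_deriv K f df /\ y = supnormK_vec K df).

Definition C1_complete {d} (K : vec d -> Prop) : Prop :=
  forall u : nat -> vec d -> R,
    (forall n, C1 K (u n)) ->
    (forall eps, 0 < eps -> exists N, forall n m, (N <= n)%nat -> (N <= m)%nat ->
       C1norm K (fun x => u n x - u m x) < eps) ->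
    exists f, C1 K f /\
      forall eps, 0 < eps -> exists N, forall n, (N <= n)%nat ->
        C1norm K (fun x => u n x - f x) < eps.

(* Main.v *)
Require Import Defs.
From HB Require Import structures.
From Stdlib Require Import Reals Lra Classical ClassicalEpsilon FunctionalExtensionality PropExtensionality.
From mathcomp Require Import ssreflect ssrbool ssrfun eqtype ssrnat seq fintype bigop.
Open Scope R_scope.

HB.instance Definition _ := Monoid.isComLaw.Build R 0 Rplus (fun x y z => esym (Rplus_assoc x y z)) Rplus_comm Rplus_0_l.

Section Vec.
Variable d : nat.
Implicit Types v w : vec d.

Lemma sum_le (F G : 'I_d -> R) : (forall i, F i <= G i) ->
  \big[Rplus/0]_(i < d) F i <= \big[Rplus/0]_(i < d) G i.
Proof. move=> H; apply: (big_ind2 (fun x y => x <= y)) => //; [lra|move=>*; lra]. Qed.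

Lemma sum_ge0 (F : 'I_d -> R) : (forall i, 0 <= F i) -> 0 <= \big[Rplus/0]_(i < d) F i.
Proof. move=> H; apply: (big_ind (fun x => 0 <= x)) => //; [lra|move=>*; lra]. Qed.

Lemma sum_abs (F : 'I_d -> R) : Rabs (\big[Rplus/0]_(i < d) F i) <= \big[Rplus/0]_(i < d) Rabs (F i).
Proof. apply: (big_ind2 (fun x y => Rabs x <= y)) => //.
  rewrite Rabs_R0; lra.
  move=> x1 x2 y1 y2 H1 H2; have := Rabs_triang x1 y1; lra.
  move=> i _; lra. Qed.

Lemma sum_scal c (F : 'I_d -> R) : \big[Rplus/0]_(i < d) (c * F i) = c * \big[Rplus/0]_(i < d) F i.
Proof. apply: (big_ind2 (fun x y => x = c * y)) => //; [ring| move=> ? ? ? ? -> ->; ring]. Qed.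

Lemma sum_opp (F : 'I_d -> R) : \big[Rplus/0]_(i < d) (- F i) = - \big[Rplus/0]_(i < d) F i.
Proof. apply: (big_ind2 (fun x y => x = - y)) => //; [ring| move=> ? ? ? ? -> ->; ring]. Qed.

Lemma sum0 : \big[Rplus/0]_(i < d) (0:R) = 0.
Proof. apply: (big_ind (fun x => x = 0)) => //; move=> ? ? -> ->; ring. Qed.

Lemma inner_ge0 v : 0 <= inner v v.
Proof. apply: sum_ge0 => i; nra. Qed.

Lemma enorm_ge0 v : 0 <= enorm v.
Proof. apply: sqrt_pos. Qed.

Lemma sq_le_inner v i : v i * v i <= inner v v.
Proof. rewrite /inner (bigD1 i) //=. rewrite -{1}(Rplus_0_r (v i * v i)). apply: Rplus_le_compat_l.
  apply: (big_ind (fun x => 0 <= x)) => //; [lra|move=>*; lra|move=> j _; nra].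
Qed.

Lemma comp_le_enorm v i : Rabs (v i) <= enorm v.
Proof. rewrite /enorm -sqrt_Rsqr_abs. apply: sqrt_le_1_alt. rewrite /Rsqr. apply: sq_le_inner. Qed.

Lemma enorm_le_sum v : enorm v <= \big[Rplus/0]_(i < d) Rabs (v i).
Proof.
  have H0 := sum_ge0 (fun i => Rabs (v i)) (fun i => Rabs_pos (v i)).
  rewrite /enorm -(sqrt_Rsqr _ H0). apply: sqrt_le_1_alt. rewrite /Rsqr /inner.
  have [] : \big[Rplus/0]_(i < d) (v i * v i) <= (\big[Rplus/0]_(i < d) Rabs (v i)) * (\big[Rplus/0]_(i < d) Rabs (v i))
     /\ 0 <= \big[Rplus/0]_(i < d) Rabs (v i); last by [].
  apply: (big_ind2 (fun x y => x <= y * y /\ 0 <= y)).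
  - split; lra.
  - move=> x1 x2 y1 y2 [H1 H1'] [H2 H2']; split; nra.
  - move=> i _; split; [| apply Rabs_pos]. rewrite -Rabs_mult. apply: Req_le. rewrite Rabs_right //. nra.
Qed.

Lemma inner_bound w v : Rabs (inner w v) <= (\big[Rplus/0]_(i < d) Rabs (w i)) * enorm v.
Proof.
  apply: Rle_trans; first apply: sum_abs.
  rewrite Rmult_comm -sum_scal. apply: sum_le => i. rewrite Rabs_mult.
  have := comp_le_enorm v i; have := Rabs_pos (w i); nra.
Qed.

Lemma enorm0 : enorm (fun _ : 'I_d => 0) = 0.
Proof. rewrite /enorm /inner. under eq_bigr do rewrite Rmult_0_l. by rewrite sum0 sqrt_0. Qed.

Lemma enorm_eq0 v : enorm v = 0 -> v = (fun _ : 'I_d => 0).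
Proof. move=> H; apply: functional_extensionality => i. have := comp_le_enorm v i. rewrite H.
  move=> Hle. case: (Req_dec (v i) 0) => // Hn. have := Rabs_pos_lt _ Hn. lra. Qed.

Lemma enorm_pos (x y : vec d) : x <> y -> 0 < enorm (vsub x y).
Proof. move=> Hxy. case: (enorm_ge0 (vsub x y)) => // H. exfalso; apply: Hxy.
  apply: functional_extensionality => i. have := f_equal (fun f => f i) (enorm_eq0 _ (esym H)).
  rewrite /vsub /=. lra. Qed.

Definition vneg v : vec d := fun i => - v i.

Lemma enorm_vsub_neg v w : enorm (vsub (vneg v) (vneg w)) = enorm (vsub v w).
Proof. rewrite /enorm /inner /vsub /vneg. f_equal. apply: eq_bigr => i _. ring. Qed.

Lemma inner_neg v w : inner (vneg v) w = - inner v w.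
Proof. rewrite /inner /vneg -sum_opp. apply: eq_bigr => i _. ring. Qed.

Lemma inner0 w : inner (fun _ : 'I_d => 0) w = 0.
Proof. rewrite /inner. under eq_bigr do rewrite Rmult_0_l. by rewrite sum0. Qed.

Lemma vsub_diag (x : vec d) : vsub x x = (fun _ : 'I_d => 0).
Proof. apply: functional_extensionality => i; rewrite /vsub; ring. Qed.

End Vec.

Lemma lub_spec (E : R -> Prop) : (exists y, E y) -> (exists B, forall y, E y -> y <= B) -> is_lub E (Rsup E).
Proof.
  move=> He [B HB]. rewrite /Rsup. apply: epsilon_spec.
  case: (completeness E) => //; first by exists B.
  move=> m Hm; by exists m.
Qed.

Lemma glb_spec (E : R -> Prop) : (exists y, E y) -> (exists B, forall y, E y -> B <= y) -> is_glb E (Rinf E).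
Proof.
  move=> [y0 He] [B HB]. rewrite /Rinf. apply: epsilon_spec.
  case: (completeness (fun y => E (- y))).
  - exists (- B) => y Hy. have := HB _ Hy. lra.
  - exists (- y0). by rewrite Ropp_involutive.
  move=> m [Hm1 Hm2]. exists (- m). split.
  - move=> y Hy. have := Hm1 (- y). rewrite Ropp_involutive => H. have := H Hy. lra.
  - move=> b Hb. have : m <= - b. { apply: Hm2 => y Hy. have := Hb _ Hy. lra. } lra.
Qed.

Lemma phi_ge (phi : nat -> nat) : (forall n m, (n < m)%nat -> (phi n < phi m)%nat) -> forall n, (n <= phi n)%nat.
Proof.
  move=> H; elim=> [|n IH] //. have := H n n.+1 (ltnSn n). move=> H2. exact: leq_ltn_trans IH H2.
Qed.

Lemma div_lt z e eps : 0 < e -> Rabs (z / e) < eps -> Rabs z < eps * e.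
Proof.
  move=> He. rewrite /Rdiv Rabs_mult Rabs_inv (Rabs_right e); last lra.
  move=> H. have -> : Rabs z = (Rabs z * / e) * e by field; lra.
  nra.
Qed.

Section Kset.
Variable d : nat.
Variable K : vec d -> Prop.
Hypothesis hK : vcompact K.
Definition zd : vec d -> vec d := fun _ _ => 0.

Lemma bounded_loc (h : vec d -> R) :
  (forall x, K x -> exists r B, 0 < r /\ forall y, K y -> enorm (vsub y x) < r -> h y <= B) ->
  exists M, forall y, K y -> h y <= M.
Proof.
  move=> H. apply: NNPP => Hn.
  have Hu : forall n : nat, exists y, K y /\ INR n < h y.
  { move=> n; apply: NNPP => H'; apply: Hn; exists (INR n) => y Ky.
    apply: Rnot_lt_le => Hl; apply: H'; exists y; auto. }
  pose u n := proj1_sig (constructive_indefinite_description _ (Hu n)).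
  have Hu' n : K (u n) /\ INR n < h (u n) := proj2_sig (constructive_indefinite_description _ (Hu n)).
  case: (hK u (fun n => proj1 (Hu' n))) => phi [l [Hphi [Kl Hconv]]].
  case: (H l Kl) => r [B [r0 HB]].
  case: (Hconv r r0) => N HN.
  case: (INR_archimed 1 B) => [|m Hm]; first lra.
  pose n := maxn N m.
  have H1 := HB (u (phi n)) (Hu' _).1 (HN n (leq_maxl _ _)).
  have H2 := (Hu' (phi n)).2.
  have H3 : (m <= phi n)%nat. { apply: leq_trans (leq_maxr N m) (phi_ge _ Hphi n). }
  have H4 : INR m <= INR (phi n) by apply: le_INR; apply/leP.
  lra.
Qed.

Lemma deriv_bounded f df : is_cont_deriv K f df -> exists M, forall y, K y -> enorm (df y) <= M.
Proof.
  move=> [Hc _]. apply: bounded_loc => x Kx.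
  case: (Hc x Kx 1 Rlt_0_1) => r [r0 Hr].
  exists r, (\big[Rplus/0]_(i < d) (Rabs (df x i) + 1)); split => // y Ky Hy.
  apply: Rle_trans (enorm_le_sum _ _) _. apply: sum_le => i.
  have := comp_le_enorm _ (vsub (df y) (df x)) i. have := Hr y Ky Hy. rewrite /vsub.
  have := Rabs_triang_inv (df y i) (df x i). lra.
Qed.

Lemma fun_bounded f df : is_cont_deriv K f df -> exists M, forall y, K y -> Rabs (f y) <= M.
Proof.
  move=> [_ Hd]. apply: bounded_loc => x Kx.
  case: (Hd x Kx 1 Rlt_0_1) => r [r0 Hr].
  have S0 := sum_ge0 _ (fun i => Rabs (df x i)) (fun i => Rabs_pos _).
  exists (Rmin r 1), (Rabs (f x) + \big[Rplus/0]_(i < d) Rabs (df x i) + 1); split.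
  - apply: Rmin_pos; lra.
  move=> y Ky Hy.
  case: (classic (y = x)) => [->|Hyx]; first lra.
  have He := enorm_pos _ _ _ Hyx.
  have Hy1 := Rlt_le_trans _ _ _ Hy (Rmin_r r 1).
  have Hyr := Rlt_le_trans _ _ _ Hy (Rmin_l r 1).
  have := div_lt _ _ _ He (Hr y Ky Hyx Hyr).
  have := inner_bound _ (df x) (vsub y x).
  set I := inner _ _. set e := enorm _. set S := \big[Rplus/0]_(i < d) _.
  move=> HI Hz.
  have := Rabs_triang (f y - f x - I) (f x + I).
  have -> : f y - f x - I + (f x + I) = f y by ring.
  have := Rabs_triang (f x) I.
  have HSe : S * e <= S * 1. { apply: Rmult_le_compat_l => //. rewrite /e; lra. }
  have He1 : e < 1 by rewrite /e.
  move=> *. lra.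
Qed.

Definition locconst (h : vec d -> R) := forall x, K x -> exists r, 0 < r /\
  forall y, K y -> enorm (vsub y x) < r -> h y = h x.

Lemma locconst_deriv h : locconst h -> is_cont_deriv K h zd.
Proof.
  move=> H; split.
  - move=> x Kx eps Heps; exists 1; split; first lra. move=> y _ _.
    rewrite /vsub. have -> : (fun i : 'I_d => 0 - 0) = (fun _ : 'I_d => 0).
    { apply: functional_extensionality => i; ring. }
    rewrite enorm0; lra.
  - move=> x Kx eps Heps. case: (H x Kx) => r [r0 Hr]. exists r; split => // y Ky _ Hy.
    rewrite (Hr y Ky Hy) inner0. have -> : h x - h x - 0 = 0 by ring.
    rewrite /Rdiv Rmult_0_l Rabs_R0; lra.
Qed.

Lemma locconst_sub_deriv u f df : locconst u -> is_cont_deriv K f df ->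
  is_cont_deriv K (fun x => u x - f x) (fun y => vneg _ (df y)).
Proof.
  move=> Hu [Hc Hd]; split.
  - move=> x Kx eps Heps. case: (Hc x Kx eps Heps) => r [r0 Hr]. exists r; split => // y Ky Hy.
    rewrite enorm_vsub_neg. exact: Hr.
  - move=> x Kx eps Heps. case: (Hd x Kx eps Heps) => r [r0 Hr].
    case: (Hu x Kx) => r' [r0' Hr'].
    exists (Rmin r r'); split; first by apply: Rmin_pos.
    move=> y Ky Hyx Hy.
    have Hy1 := Rlt_le_trans _ _ _ Hy (Rmin_l r r').
    have Hy2 := Rlt_le_trans _ _ _ Hy (Rmin_r r r').
    rewrite (Hr' y Ky Hy2) inner_neg.
    have -> : u x - f y - (u x - f x) - - inner (df x) (vsub y x) = - (f y - f x - inner (df x) (vsub y x)) by ring.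
    rewrite /Rdiv Ropp_mult_distr_l_reverse Rabs_Ropp. exact: Hr.
Qed.

Lemma sup_ge g M y : (forall x, K x -> Rabs (g x) <= M) -> K y -> Rabs (g y) <= supnormK K g.
Proof.
  move=> HM Ky. have [H1 _] : is_lub (fun z => exists x, K x /\ z = Rabs (g x)) (supnormK K g).
  { apply: lub_spec; first by exists (Rabs (g y)), y.
    exists M => z [x [Kx ->]]; exact: HM. }
  apply: H1; by exists y.
Qed.

Lemma sup_le g B : (exists x, K x) -> (forall x, K x -> Rabs (g x) <= B) -> supnormK K g <= B.
Proof.
  move=> [y Ky] HM. have [_ H2] : is_lub (fun z => exists x, K x /\ z = Rabs (g x)) (supnormK K g).
  { apply: lub_spec; first by exists (Rabs (g y)), y.
    exists B => z [x [Kx ->]]; exact: HM. }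
  apply: H2 => z [x [Kx ->]]; exact: HM.
Qed.

Lemma supvec_ge0 dg y : (exists M, forall x, K x -> enorm (dg x) <= M) -> K y -> 0 <= supnormK_vec K dg.
Proof.
  move=> [M HM] Ky. have [H1 _] : is_lub (fun z => exists x, K x /\ z = enorm (dg x)) (supnormK_vec K dg).
  { apply: lub_spec; first by exists (enorm (dg y)), y.
    exists M => z [x [Kx ->]]; exact: HM. }
  apply: Rle_trans (enorm_ge0 _ (dg y)) _. apply: H1; by exists y.
Qed.

Lemma supvec_zero : (exists x, K x) -> supnormK_vec K zd <= 0.
Proof.
  move=> [y Ky]. have [_ H2] : is_lub (fun z => exists x, K x /\ z = enorm (zd x)) (supnormK_vec K zd).
  { apply: lub_spec; first by exists (enorm (fun _ : 'I_d => 0)), y.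
    exists 0 => z [x [Kx ->]]. rewrite enorm0; lra. }
  apply: H2 => z [x [Kx ->]]. rewrite enorm0; lra.
Qed.

Lemma inf_ge0 h y : K y ->
  (exists dh, is_cont_deriv K h dh) ->
  0 <= Rinf (fun z => exists dh, is_cont_deriv K h dh /\ z = supnormK_vec K dh).
Proof.
  move=> Ky [dh Hdh].
  have [_ H2] : is_glb (fun z => exists dh, is_cont_deriv K h dh /\ z = supnormK_vec K dh)
     (Rinf (fun z => exists dh, is_cont_deriv K h dh /\ z = supnormK_vec K dh)).
  { apply: glb_spec; first by exists (supnormK_vec K dh), dh.
    exists 0 => z [dh' [H' ->]]. apply: supvec_ge0 Ky. exact: deriv_bounded H'. }
  apply: H2 => z [dh' [H' ->]]. apply: supvec_ge0 Ky. exact: deriv_bounded H'.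
Qed.

Lemma C1norm_ge h dh y : is_cont_deriv K h dh -> K y -> Rabs (h y) <= C1norm K h.
Proof.
  move=> Hdh Ky. rewrite /C1norm.
  have := inf_ge0 h y Ky (ex_intro _ dh Hdh).
  case: (fun_bounded _ _ Hdh) => M HM.
  have := sup_ge h M y HM Ky. lra.
Qed.

Lemma C1norm_le_lc h B : (exists x, K x) -> locconst h -> (forall x, K x -> Rabs (h x) <= B) ->
  C1norm K h <= B.
Proof.
  move=> [y Ky] Hl HB. rewrite /C1norm.
  have Hd := locconst_deriv h Hl.
  have [H1 _] : is_glb (fun z => exists dh, is_cont_deriv K h dh /\ z = supnormK_vec K dh)
     (Rinf (fun z => exists dh, is_cont_deriv K h dh /\ z = supnormK_vec K dh)).
  { apply: glb_spec; first by exists (supnormK_vec K zd), zd.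
    exists 0 => z [dh' [H' ->]]. apply: supvec_ge0 Ky. exact: deriv_bounded H'. }
  have := H1 _ (ex_intro _ zd (conj Hd erefl)).
  have := supvec_zero (ex_intro _ y Ky).
  have := sup_le h B (ex_intro _ y Ky) HB. lra.
Qed.

End Kset.

Section Topo.
Variable d : nat.

Definition relclopen (X A : vec d -> Prop) := forall x, X x -> exists r, 0 < r /\
  forall y, X y -> enorm (vsub y x) < r -> (A y <-> A x).

Definition fincomp (X : vec d -> Prop) := exists l : list (vec d), forall y, X y ->
      exists x, List.In x l /\ same_component X x y.

Lemma relclopen_refl X : relclopen X X.
Proof. move=> x Xx; exists 1; split; first lra. move=> y Xy _; tauto. Qed.

Lemma relclopen_trans X T A : (forall y, A y -> T y) ->
  relclopen X T -> relclopen (fun y => X y /\ T y) A -> relclopen X A.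
Proof.
  move=> HAT HT HA x Xx. case: (HT x Xx) => r1 [r10 H1].
  case: (classic (T x)) => Tx.
  - case: (HA x (conj Xx Tx)) => r2 [r20 H2].
    exists (Rmin r1 r2); split; first exact: Rmin_pos.
    move=> y Xy Hy. have Hy1 := Rlt_le_trans _ _ _ Hy (Rmin_l r1 r2).
    have Hy2 := Rlt_le_trans _ _ _ Hy (Rmin_r r1 r2).
    have Ty : T y by apply/(H1 y Xy Hy1).
    exact: H2.
  - exists r1; split => // y Xy Hy. have := H1 y Xy Hy. have := HAT y. have := HAT x. tauto.
Qed.

Lemma relclopen_diff X T A : relclopen X T -> relclopen X A -> relclopen X (fun y => T y /\ ~ A y).
Proof.
  move=> HT HA x Xx. case: (HT x Xx) => r1 [r10 H1]. case: (HA x Xx) => r2 [r20 H2].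
  exists (Rmin r1 r2); split; first exact: Rmin_pos.
  move=> y Xy Hy. have Hy1 := Rlt_le_trans _ _ _ Hy (Rmin_l r1 r2).
  have Hy2 := Rlt_le_trans _ _ _ Hy (Rmin_r r1 r2).
  have := H1 y Xy Hy1. have := H2 y Xy Hy2. tauto.
Qed.

Lemma fincomp_union X A B : (forall y, X y -> A y \/ B y) -> (forall y, A y -> X y) -> (forall y, B y -> X y) ->
  fincomp A -> fincomp B -> fincomp X.
Proof.
  move=> Hcov HA HB [lA HlA] [lB HlB]. exists (lA ++ lB) => y Xy.
  case: (Hcov y Xy) => [Ay|By].
  - case: (HlA y Ay) => x [Hin [C [HC [HCA [Cx Cy]]]]]. exists x; split.
    + apply: List.in_or_app; by left.
    + exists C; split => //; split; [move=> z Cz; exact: HA (HCA z Cz) | by split].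
  - case: (HlB y By) => x [Hin [C [HC [HCA [Cx Cy]]]]]. exists x; split.
    + apply: List.in_or_app; by right.
    + exists C; split => //; split; [move=> z Cz; exact: HB (HCA z Cz) | by split].
Qed.

Lemma inf_notconn X : infinitely_many_components X -> exists U V : vec d -> Prop,
  vopen U /\ vopen V /\ (forall x, X x -> U x \/ V x) /\ (forall x, X x -> U x -> V x -> False) /\
  ~ (forall x, X x -> U x) /\ ~ (forall x, X x -> V x).
Proof.
  move=> Hinf.
  have [x0 Xx0] : exists x0, X x0.
  { apply: NNPP => Hn. apply: Hinf. exists nil => y Xy. exfalso; apply: Hn; by exists y. }
  apply: NNPP => Hn. apply: Hinf. exists (x0 :: nil) => y Xy. exists x0; split; first by left.
  exists X; repeat split => //.
  move=> U V HU HV Hc Hd.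
  case: (classic (forall x, X x -> U x)) => HU'; first by left.
  case: (classic (forall x, X x -> V x)) => HV'; first by right.
  exfalso; apply: Hn. exists U, V; repeat split => //.
Qed.

Definition goodA (X A : vec d -> Prop) := infinitely_many_components X ->
  (exists a, A a) /\ (forall y, A y -> X y) /\ relclopen X A /\
  infinitely_many_components (fun y => X y /\ ~ A y).

Lemma goodA_ex X : exists A, goodA X A.
Proof.
  case: (classic (infinitely_many_components X)) => Hinf; last by exists X => H.
  case: (inf_notconn X Hinf) => U [V [HU [HV [Hc [Hd [HnU HnV]]]]]].
  have Hloc : forall x, X x -> exists r, 0 < r /\ forall y, X y -> enorm (vsub y x) < r -> (U y <-> U x).
  { move=> x Xx. case: (classic (U x)) => Ux.
    - case: (HU x Ux) => r [r0 Hr]. exists r; split => // y Xy Hy. have := Hr y Hy. tauto.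
    - have Vx : V x by case: (Hc x Xx).
      case: (HV x Vx) => r [r0 Hr]. exists r; split => // y Xy Hy. have := Hr y Hy.
      have := Hd y Xy. tauto. }
  pose A0 := fun y => X y /\ U y. pose A1 := fun y => X y /\ ~ U y.
  have HA0 : relclopen X A0.
  { move=> x Xx. case: (Hloc x Xx) => r [r0 Hr]. exists r; split => // y Xy Hy.
    have := Hr y Xy Hy. rewrite /A0. tauto. }
  have HA1 : relclopen X A1.
  { move=> x Xx. case: (Hloc x Xx) => r [r0 Hr]. exists r; split => // y Xy Hy.
    have := Hr y Xy Hy. rewrite /A1. tauto. }
  have [a0 Ha0] : exists a, A0 a.
  { apply: NNPP => Hn; apply: HnV => x Xx. case: (Hc x Xx) => // Ux. exfalso; apply: Hn; by exists x. }
  have [a1 Ha1] : exists a, A1 a.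
  { apply: NNPP => Hn; apply: HnU => x Xx. apply: NNPP => Ux. apply: Hn; by exists x. }
  case: (classic (infinitely_many_components (fun y => X y /\ ~ A0 y))) => H0.
  - exists A0 => _; repeat split => //; first by exists a0.
    by move=> y [].
  - exists A1 => _; repeat split => //; first by exists a1.
    + by move=> y [].
    + move=> Hfin. apply: Hinf.
      apply: (fincomp_union X (fun y => X y /\ ~ A0 y) (fun y => X y /\ ~ A1 y)).
      * move=> y Xy. rewrite /A0 /A1. case: (classic (U y)); tauto.
      * by move=> y [].
      * by move=> y [].
      * exact: NNPP.
      * exact: Hfin.
Qed.

Definition chooseA X := proj1_sig (constructive_indefinite_description _ (goodA_ex X)).
Lemma chooseA_spec X : goodA X (chooseA X).
Proof. exact: proj2_sig (constructive_indefinite_description _ (goodA_ex X)). Qed.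

Fixpoint Kseq (K : vec d -> Prop) (n : nat) : vec d -> Prop :=
  match n with
  | 0 => K
  | n'.+1 => fun y => Kseq K n' y /\ ~ chooseA (Kseq K n') y
  end.

Lemma Kseq_props K : infinitely_many_components K -> forall n,
  infinitely_many_components (Kseq K n) /\ (forall y, Kseq K n y -> K y) /\ relclopen K (Kseq K n).
Proof.
  move=> Hinf; elim=> [|n [Hi [Hs Hc]]] /=.
  - split => //; split => //; exact: relclopen_refl.
  - have [Ha [Hsub [Hcl Hi']]] := chooseA_spec (Kseq K n) Hi.
    split => //; split; first by move=> y [/Hs].
    apply: relclopen_diff => //. apply: (relclopen_trans K (Kseq K n)) => //.
    move=> x [Kx Kn]. case: (Hcl x Kn) => r [r0 Hr]. exists r; split => // y [Ky Kny]. exact: Hr.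
Qed.

Lemma Kseq_decr K n m y : (n <= m)%nat -> Kseq K m y -> Kseq K n y.
Proof.
  move=> /subnKC <-. elim: (m - n)%nat => [|k IH]; first by rewrite addn0.
  rewrite addnS /= => [[H _]]; exact: IH.
Qed.

Lemma pieces K : infinitely_many_components K -> exists A : nat -> vec d -> Prop,
  (forall n, exists a, A n a) /\ (forall n y, A n y -> K y) /\ (forall n, relclopen K (A n)) /\
  (forall n m y, n <> m -> A n y -> A m y -> False).
Proof.
  move=> Hinf. exists (fun n => chooseA (Kseq K n)).
  have H n := chooseA_spec (Kseq K n) (Kseq_props K Hinf n).1.
  split; first by move=> n; case: (H n).
  split; first by move=> n y Hy; case: (H n) => _ [Hs _]; apply: (Kseq_props K Hinf n).2.1; apply: Hs.
  split.
  - move=> n. case: (H n) => _ [Hs [Hcl _]]. apply: (relclopen_trans K (Kseq K n)) => //.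
    + exact: (Kseq_props K Hinf n).2.2.
    + move=> x [Kx Kn]. case: (Hcl x Kn) => r [r0 Hr]. exists r; split => // y [Ky Kny]. exact: Hr.
  - have Hdis : forall n m y, (n < m)%nat -> chooseA (Kseq K n) y -> chooseA (Kseq K m) y -> False.
    { move=> n m y Hnm Hn Hm. case: (H m) => _ [Hs _].
      have := Kseq_decr K n.+1 m y Hnm (Hs y Hm). by case. }
    move=> n m y Hnm Hn Hm. case: (ltngtP n m) => Hc.
    + exact: Hdis Hc Hn Hm.
    + exact: Hdis Hc Hm Hn.
    + by apply: Hnm.
Qed.

End Topo.

Section Seq.
Variable d : nat.
Variable B : nat -> vec d -> Prop.
Variable c : nat -> R.
Hypothesis Bdis : forall n m y, n <> m -> B n y -> B m y -> False.

Definition ind (P : Prop) (a : R) : R := if excluded_middle_informative P then a else 0.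

Fixpoint useq (N : nat) (y : vec d) : R :=
  match N with
  | 0 => 0
  | N'.+1 => useq N' y + ind (B N' y) (c N')
  end.

Lemma useq_none N y : (forall m, ~ B m y) -> useq N y = 0.
Proof.
  move=> H; elim: N => [|N IH] //=. rewrite IH /ind.
  destruct (excluded_middle_informative (B N y)) as [Hb|Hb]; simpl; [exfalso; exact: H Hb| ring].
Qed.

Lemma useq_in N m y : B m y -> useq N y = if (m < N)%nat then c m else 0.
Proof.
  move=> Hm; elim: N => [|N IH] //=. rewrite IH /ind.
  destruct (excluded_middle_informative (B N y)) as [Hb|Hb]; simpl.
  - have HmN : m = N. { apply: NNPP => Hne; exact: Bdis Hne Hm Hb. }
    subst m. rewrite ltnn ltnSn. ring.
  - have HmN : m <> N by move=> E; subst; auto.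
    have -> : (m < N.+1)%nat = (m < N)%nat.
    { rewrite ltnS leq_eqVlt. have -> : (m == N) = false by apply/eqP. done. }
    case: (m < N)%nat; ring.
Qed.

Lemma useq_locconst (K : vec d -> Prop) N : (forall n, relclopen d K (B n)) -> locconst d K (useq N).
Proof.
  move=> Hcl; elim: N => [|N IH] /= x Kx.
  - exists 1; split => //; lra.
  - case: (IH x Kx) => r1 [r10 H1]. case: (Hcl N x Kx) => r2 [r20 H2].
    exists (Rmin r1 r2); split; first exact: Rmin_pos.
    move=> y Ky Hy. have Hy1 := Rlt_le_trans _ _ _ Hy (Rmin_l r1 r2).
    have Hy2 := Rlt_le_trans _ _ _ Hy (Rmin_r r1 r2).
    rewrite (H1 y Ky Hy1) /ind. have := H2 y Ky Hy2.
    destruct (excluded_middle_informative (B N y)); destruct (excluded_middle_informative (B N x)); simpl; tauto.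
Qed.

End Seq.

Lemma locconst_sub d K (u v : vec d -> R) : locconst d K u -> locconst d K v -> locconst d K (fun y => u y - v y).
Proof.
  move=> Hu Hv x Kx. case: (Hu x Kx) => r1 [r10 H1]. case: (Hv x Kx) => r2 [r20 H2].
  exists (Rmin r1 r2); split; first exact: Rmin_pos.
  move=> y Ky Hy. have Hy1 := Rlt_le_trans _ _ _ Hy (Rmin_l r1 r2).
  have Hy2 := Rlt_le_trans _ _ _ Hy (Rmin_r r1 r2).
  by rewrite (H1 y Ky Hy1) (H2 y Ky Hy2).
Qed.

Lemma small_eq0 z : (forall eps, 0 < eps -> Rabs z < eps) -> z = 0.
Proof.
  move=> H. case: (Req_dec z 0) => // Hn. have Hp := Rabs_pos_lt _ Hn.
  have := H _ Hp. lra.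
Qed.

Theorem mainTheorem5 (d : nat) (K : vec d -> Prop) :
  vcompact K -> infinitely_many_components K -> ~ C1_complete K.
Proof.
  move=> hK Hinf Hcomp.
  case: (pieces d K Hinf) => A [Hne [HAK [HAcl HAdis]]].
  pose a n := proj1_sig (constructive_indefinite_description _ (Hne n)).
  have Ha n : A n (a n) := proj2_sig (constructive_indefinite_description _ (Hne n)).
  case: (hK a (fun n => HAK n _ (Ha n))) => phi [x [Hphi [Kx Hconv]]].
  have Hxn : forall m, ~ A m x.
  { move=> m Amx. case: (HAcl m x Kx) => r [r0 Hr]. case: (Hconv r r0) => N HN.
    pose n := (N + m.+1)%nat.
    have Hn1 : (N <= n)%nat by rewrite leq_addr.
    have Hn2 : (m < phi n)%nat. { apply: leq_trans (phi_ge _ Hphi n). by rewrite /n addnS ltnS leq_addl. }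
    have HAm : A m (a (phi n)). { apply/(Hr _ (HAK _ _ (Ha (phi n))) (HN n Hn1)) => //. }
    have Hne' : phi n <> m. { move=> E. rewrite E ltnn in Hn2. done. }
    exact: (HAdis (phi n) m (a (phi n)) Hne' (Ha (phi n)) HAm). }
  have Hphi_inj : forall k l, k <> l -> phi k <> phi l.
  { move=> k l Hkl E. case: (ltngtP k l) => Hc.
    - have := Hphi k l Hc. by rewrite E ltnn.
    - have := Hphi l k Hc. by rewrite E ltnn.
    - by apply: Hkl. }
  pose Bs k := A (phi k).
  have Bdis : forall n m y, n <> m -> Bs n y -> Bs m y -> False.
  { move=> n m y Hnm. apply: HAdis. exact: Hphi_inj. }
  pose e k := enorm (vsub (a (phi k)) x).
  have He k : 0 < e k.
  { apply: enorm_pos => E. apply: (Hxn (phi k)). rewrite -E. exact: Ha. }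
  pose c k := sqrt (e k).
  have Hc0 k : 0 <= c k by apply: sqrt_pos.
  have Hcsmall : forall eps, 0 < eps -> exists N, forall k, (N <= k)%nat -> c k < eps.
  { move=> eps Heps. case: (Hconv (eps * eps)) => [|N HN]; first nra.
    exists N => k Hk. rewrite /c -(sqrt_square eps); last lra.
    apply: sqrt_lt_1_alt. split; first exact: Rlt_le (He k). exact: HN. }
  pose u := useq d Bs c.
  have Hcl : forall n, relclopen d K (Bs n) by move=> n; apply: HAcl.
  have Hlc : forall N, locconst d K (u N) by move=> N; apply: useq_locconst.
  have HC1 : forall n, Defs.C1 K (u n).
  { move=> n. exists (zd d). apply: locconst_deriv. exact: Hlc. }
  have Hcauchy : forall eps, 0 < eps -> exists N, forall n m, (N <= n)%nat -> (N <= m)%nat ->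
       C1norm K (fun x => u n x - u m x) < eps.
  { move=> eps Heps. case: (Hcsmall (eps / 2)) => [|N HN]; first lra.
    exists N => n m Hn Hm.
    apply: Rle_lt_trans (_ : eps / 2 < eps); last lra.
    apply: (C1norm_le_lc d K hK); first by exists x.
    - apply: locconst_sub; exact: Hlc.
    - move=> y Ky. case: (classic (exists k, Bs k y)) => [[k Hk]|Hno].
      + rewrite /u (useq_in d Bs c Bdis n k y Hk) (useq_in d Bs c Bdis m k y Hk).
        case Hkn : (k < n)%nat; case Hkm : (k < m)%nat.
        * rewrite Rminus_diag Rabs_R0; lra.
        * have HNk : (N <= k)%nat. { apply: leq_trans Hm _. by rewrite leqNgt Hkm. }
          have := HN k HNk. rewrite Rminus_0_r Rabs_right; [lra|exact: Rle_ge].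
        * have HNk : (N <= k)%nat. { apply: leq_trans Hn _. by rewrite leqNgt Hkn. }
          have := HN k HNk. rewrite Rminus_0_l Rabs_Ropp Rabs_right; [lra|exact: Rle_ge].
        * rewrite Rminus_diag Rabs_R0; lra.
      + have Hno' : forall k, ~ Bs k y by move=> k Hk; apply: Hno; exists k.
        rewrite /u !(useq_none d Bs c) // Rminus_diag Rabs_R0; lra. }
  case: (Hcomp u HC1 Hcauchy) => f [[df Hdf] Hlim].
  have Hpt : forall y, K y -> forall eps, 0 < eps -> exists N, forall n, (N <= n)%nat -> Rabs (u n y - f y) < eps.
  { move=> y Ky eps Heps. case: (Hlim eps Heps) => N HN. exists N => n Hn.
    apply: Rle_lt_trans (HN n Hn).
    apply: (C1norm_ge d K hK (fun y => u n y - f y) (fun y => vneg d (df y))) => //.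
    apply: locconst_sub_deriv => //. }
  have Hfx : f x = 0.
  { have := small_eq0 (f x). rewrite -Rabs_Ropp. apply => eps Heps. case: (Hpt x Kx eps Heps) => N HN.
    have := HN N (leqnn N). rewrite /u useq_none.
    - by rewrite Rminus_0_l.
    - move=> m; exact: Hxn. }
  have Hfa : forall k, f (a (phi k)) = c k.
  { move=> k. have Hk : Bs k (a (phi k)) by apply: Ha.
    have := small_eq0 (f (a (phi k)) - c k). have E : f (a (phi k)) - c k = 0 -> f (a (phi k)) = c k by lra.
    move=> H; apply: E; apply: H => eps Heps.
    case: (Hpt _ (HAK _ _ (Ha (phi k))) eps Heps) => N HN.
    have := HN (maxn N k.+1) (leq_maxl _ _). rewrite /u (useq_in d Bs c Bdis _ k _ Hk).
    have -> : (k < maxn N k.+1)%nat by apply: leq_trans (leq_maxr N k.+1).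
    by rewrite -Rabs_Ropp Ropp_minus_distr. }
  case: Hdf => _ Hd.
  case: (Hd x Kx 1 Rlt_0_1) => delta [Hdel Hdelta].
  set S := \big[Rplus/0]_(i < d) Rabs (df x i).
  have S0 : 0 <= S by apply: sum_ge0 => i; apply: Rabs_pos.
  have Hq : 0 < (S + 1) * (S + 1) by nra.
  case: (Hconv (Rmin delta (/ ((S + 1) * (S + 1))))) => [|N HN].
  { apply: Rmin_pos => //. exact: Rinv_0_lt_compat. }
  have HeN := HN N (leqnn N).
  have He1 := Rlt_le_trans _ _ _ HeN (Rmin_l _ _).
  have He2 := Rlt_le_trans _ _ _ HeN (Rmin_r _ _).
  have Hyx : a (phi N) <> x.
  { move=> E. apply: (Hxn (phi N)). rewrite -E. exact: Ha. }
  have := div_lt _ _ _ (He N) (Hdelta _ (HAK _ _ (Ha (phi N))) Hyx He1).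
  rewrite Hfa Hfx.
  have HI := inner_bound d (df x) (vsub (a (phi N)) x).
  rewrite -/S -/(e N) in HI *.
  move=> Hz.
  have Hs : sqrt (e N) * sqrt (e N) = e N by apply: sqrt_sqrt; apply: Rlt_le (He N).
  have Hsp : 0 < sqrt (e N) by apply: sqrt_lt_R0 (He N).
  have Heq : e N * ((S + 1) * (S + 1)) < 1.
  { have := Rmult_lt_compat_r _ _ _ Hq He2. rewrite Rinv_l; [rewrite /e /=; lra | lra]. }
  have Hlt : c N < (S + 1) * e N.
  { have := Rabs_triang (c N - 0 - inner (df x) (vsub (a (phi N)) x)) (inner (df x) (vsub (a (phi N)) x)).
    have -> : c N - 0 - inner (df x) (vsub (a (phi N)) x) + inner (df x) (vsub (a (phi N)) x) = c N by ring.
    rewrite Rabs_right; last exact: Rle_ge. lra. }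
  rewrite /c in Hlt.
  set s := sqrt (e N) in Hs Hsp Hlt.
  set t := (S + 1) * s.
  have Ht1 : 1 < t. { rewrite -Hs in Hlt. rewrite /t. nra. }
  have Ht2 : t * t < 1. { rewrite /t. rewrite -Hs in Heq. nra. }
  nra.
Qed.
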